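(* If $G$ is a connected graph with diameter at most two, then $\chi_L(G)=\chi_{L_2}(G)$.
   Context: All graphs are finite and simple. A proper $k$-coloring of $G$ is a map $f$ from $V(G)$ onto $[k]=\{1,\dots,k\}$ with adjacent vertices receiving different colors; $f(S)=\{f(u):u\in S\}$ and $N_G(u)$ is the neighborhood of $u$. For a connected graph $G$ with proper $k$-coloring $f$ and color classes $V_i=f^{-1}(i)$, the color code of $v$ is $(d(v,V_1),\dots,d(v,V_k))$, where $d(v,S)=\min_{x\in S}d(v,x)$; $f$ is a locating coloring if distinct vertices have distinct color codes, and $\chi_L(G)$ is the minimum number of colors in a locating coloring. A proper $k$-coloring $f$ is a neighbor locating coloring if for any two distinct vertices $u,v$ with $f(u)=f(v)$ we have $f(N_G(u))\ne f(N_G(v))$; $\chi_{L_2}(G)$ is the minimum number of colors in a neighbor locating coloring of $G$. *)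

(* Defs.v *)
From mathcomp Require Import all_boot.
Set Implicit Arguments. Unset Strict Implicit. Unset Printing Implicit Defensive.

Section Graphs.
Variable T : finType.
Variable e : rel T.

Definition simple_graph : Prop := symmetric e /\ irreflexive e.

Definition connected : Prop := forall u v : T, connect e u v.

Fixpoint within (n : nat) (u v : T) : bool :=
  if n is n'.+1 then within n' u v || [exists w, e u w && within n' w v]
  else u == v.

(* graph distance: least n with a walk of length <= n (for connected graphs
   this is < #|T|; unreachable pairs get #|T|, irrelevant here) *)
Definition dist (u v : T) : nat := find (fun n => within n u v) (iota 0 #|T|).

Definition diameter_le (d : nat) : Prop := forall u v : T, dist u v <= d.

Definition neighborhood (u : T) : {set T} := [set w | e u w].

Definition proper_coloring (k : nat) (f : T -> 'I_k) : Prop :=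
  (forall u v, e u v -> f u != f v) /\ (forall i : 'I_k, exists v, f v = i).

Definition dist_class (k : nat) (f : T -> 'I_k) (v : T) (i : 'I_k) : nat :=
  \big[minn/#|T|]_(x | f x == i) dist v x.

Definition color_code (k : nat) (f : T -> 'I_k) (v : T) : {ffun 'I_k -> nat} :=
  [ffun i => dist_class f v i].

Definition locating_coloring (k : nat) (f : T -> 'I_k) : Prop :=
  proper_coloring f /\
  (forall u v : T, u != v -> color_code f u != color_code f v).

Definition neighbor_locating_coloring (k : nat) (f : T -> 'I_k) : Prop :=
  proper_coloring f /\
  (forall u v : T, u != v -> f u = f v ->
     f @: neighborhood u != f @: neighborhood v).

Definition is_chiL (k : nat) : Prop :=
  (exists f : T -> 'I_k, locating_coloring f) /\
  (forall k' (f : T -> 'I_k'), locating_coloring f -> k <= k').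

Definition is_chiL2 (k : nat) : Prop :=
  (exists f : T -> 'I_k, neighbor_locating_coloring f) /\
  (forall k' (f : T -> 'I_k'), neighbor_locating_coloring f -> k <= k').

End Graphs.

(* Main.v *)
Require Import Defs.
From mathcomp Require Import all_boot.

Section Aux.
Variable T : finType.
Variable e : rel T.
Hypothesis sg : simple_graph e.
Hypothesis T0 : 0 < #|T|.

Lemma card2_of (u v : T) : u != v -> 1 < #|T|.
Proof.
move=> uv; have := subset_leq_card (subsetT [set u; v]).
by rewrite cards2 uv cardsT.
Qed.

Lemma dist_find_le (u v : T) i : i < #|T| -> within e i u v -> dist e u v <= i.
Proof.
move=> ilt w; rewrite /dist leqNgt; apply/negP => /(before_find 0).
by rewrite nth_iota // w.
Qed.

Lemma dist0 (u v : T) : (dist e u v == 0) = (u == v).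
Proof.
apply/idP/idP.
- move/eqP=> d0.
  have hs : has (fun n => within e n u v) (iota 0 #|T|).
    by rewrite has_find size_iota -/(dist e u v) d0.
  by have := nth_find 0 hs; rewrite -/(dist e u v) d0 nth_iota.
- move/eqP=> ->; rewrite -leqn0; apply: dist_find_le => //=.
Qed.

Lemma dist1 (u v : T) : (dist e u v == 1) = e u v.
Proof.
case: sg => sym irr.
apply/idP/idP.
- move/eqP=> d1.
  have hs : has (fun n => within e n u v) (iota 0 #|T|).
    by rewrite has_find size_iota -/(dist e u v) d1 (@card2_of u v) // -dist0 d1.
  have := nth_find 0 hs; rewrite -/(dist e u v) d1 nth_iota; last first.
    by rewrite (@card2_of u v) // -dist0 d1.
  rewrite /=.
  have := dist0 u v; rewrite d1 /= => <-; rewrite /=.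
  by case/existsP=> w /andP [uw /eqP <-].
- move=> euv.
  have uv : u != v by apply/eqP=> E; move: euv; rewrite E irr.
  have le1 : dist e u v <= 1.
    apply: dist_find_le; first exact: card2_of uv.
    by rewrite /=; apply/orP; right; apply/existsP; exists v; rewrite euv /=.
  have : dist e u v != 0 by rewrite dist0.
  by case: (dist e u v) le1 => [|[|]].
Qed.

Lemma dc_lower k (f : T -> 'I_k) v i n : n <= #|T| ->
  (forall x, f x == i -> n <= dist e v x) -> n <= dist_class e f v i.
Proof.
move=> hn hx; rewrite /dist_class.
apply: (big_ind (fun m => n <= m)) => //.
  by move=> a b ha hb; rewrite leq_min ha hb.
Qed.

Lemma dc_upper k (f : T -> 'I_k) v i x : f x == i -> dist_class e f v i <= dist e v x.
Proof.
move=> fx; rewrite /dist_class.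
have : x \in index_enum T by rewrite mem_index_enum.
elim: (index_enum T) => [|y r IH] //=.
rewrite inE big_cons; case/orP=> [/eqP <-|xr].
  by rewrite fx geq_minl.
case: ifP => _; last exact: IH.
by rewrite geq_min IH ?orbT.
Qed.

Lemma dc_val k (f : T -> 'I_k) v i : proper_coloring e f -> diameter_le e 2 ->
  dist_class e f v i =
  if f v == i then 0 else if i \in f @: neighborhood e v then 1 else 2.
Proof.
move=> [pr onto] diam.
case: eqP => fvi.
  apply/eqP; rewrite -leqn0; apply: leq_trans (@dc_upper k f v i v (introT eqP fvi)) _.
  by rewrite leqn0 dist0.
have ne x : f x == i -> x != v.
  by move=> /eqP fx; apply/eqP=> E; apply: fvi; rewrite -E.
case: ifP => hin.
  case/imsetP: hin => w; rewrite inE => evw fwi.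
  apply/eqP; rewrite eqn_leq; apply/andP; split.
    by apply: leq_trans (@dc_upper k f v i w (introT eqP (esym fwi))) _; rewrite leq_eqVlt dist1 // evw.
  apply: dc_lower => // x fx; rewrite lt0n dist0 //.
  by rewrite eq_sym ne.
have [x fx] := onto i.
have fx' : f x == i by apply/eqP.
apply/eqP; rewrite eqn_leq; apply/andP; split.
  exact: leq_trans (@dc_upper k f v i x fx') (diam v x).
apply: dc_lower.
  by apply: (@card2_of x v); apply: ne.
move=> y fy.
have d0 : dist e v y != 0 by rewrite dist0 // eq_sym ne.
have d1 : dist e v y != 1.
  rewrite dist1 //; apply/negP=> evy; move: hin.
  by rewrite -(eqP fy); move/negP; apply; apply/imsetP; exists y; rewrite ?inE.
by case: (dist e v y) d0 d1 => [|[|]].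
Qed.

Lemma code_eq k (f : T -> 'I_k) u v : proper_coloring e f -> diameter_le e 2 ->
  (color_code e f u == color_code e f v) =
  (f u == f v) && (f @: neighborhood e u == f @: neighborhood e v).
Proof.
move=> pf diam.
have [pr onto] := pf.
have nin w : f w \notin f @: neighborhood e w.
  apply/imsetP=> [[y]]; rewrite inE => ewy fwy.
  by move: (pr _ _ ewy); rewrite fwy eqxx.
apply/eqP/andP.
  move=> hc.
  have hi i : dist_class e f u i = dist_class e f v i.
    by have := congr1 (fun g : {ffun _ -> nat} => g i) hc; rewrite /color_code !ffunE.
  have fuv : f u == f v.
    by have := hi (f u); rewrite (@dc_val k f u (f u) pf diam) (@dc_val k f v (f u) pf diam) eqxx; case: eqP => [->//|_]; case: (_ \in _) => //.
  split => //; apply/eqP/setP => i.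
  have := hi i; rewrite (@dc_val k f u i pf diam) (@dc_val k f v i pf diam) (eqP fuv).
  case: eqP => [<-|_]; first by rewrite -{1}(eqP fuv) (negPf (nin u)) (negPf (nin v)).
  by do 2 case: ifP.
by move=> [/eqP fuv /eqP nuv]; apply/ffunP => i; rewrite /color_code !ffunE (@dc_val k f u i pf diam) (@dc_val k f v i pf diam) fuv nuv.
Qed.

Lemma loc_equiv k (f : T -> 'I_k) : diameter_le e 2 ->
  locating_coloring e f <-> neighbor_locating_coloring e f.
Proof.
move=> diam; split.
  move=> [pf hl]; split => // u v uv fuv.
  have := hl u v uv; rewrite code_eq // fuv eqxx /=.
  by [].
move=> [pf hl]; split => // u v uv.
rewrite code_eq //; apply/negP => /andP [/eqP fuv /eqP nuv].
by move/eqP: (hl u v uv fuv).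
Qed.
End Aux.

Theorem proposition1 (T : finType) (e : rel T) :
  simple_graph e -> 0 < #|T| -> connected e -> diameter_le e 2 ->
  forall k : nat, is_chiL e k <-> is_chiL2 e k.
Proof.
move=> sg T0 _ diam k.
have E k' (f : T -> 'I_k') := @loc_equiv T e sg T0 k' f diam.
split.
  move=> [[f hf] hmin]; split.
    by exists f; apply/E.
  by move=> k' g /E; apply: hmin.
move=> [[f hf] hmin]; split.
  by exists f; apply/E.
by move=> k' g /E; apply: hmin.
Qed.
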